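(* Let $(X,d)$ be an ultrametric space, let $\mathcal{U}_0=\{X\}$ and $\mathcal{U}_n=\{B(x,\tfrac1n):x\in X\}$ for $n\in\mathbb{N}_+$. Then $\mathcal{A}=\{\mathcal{U}_n\}_{n\in\mathbb{N}}$ is a tame defining sequence of $X$, which is complete if and only if the ultrametric $u_{\mathcal{A}}$ is complete.
   Context: An ultrametric space satisfies $d(x,z)\le\max\{d(x,y),d(y,z)\}$; $B(x,r)$ is the open ball of radius $r$ at $x$. A partition is a cover by pairwise disjoint nonempty clopen sets; $\mathcal{U}[x]$ is the element containing $x$. A defining sequence is a sequence $\{\mathcal{U}_n\}$ of partitions with each element of $\mathcal{U}_{n+1}$ contained in an element of $\mathcal{U}_n$ and $\bigcup_n\mathcal{U}_n$ a basis; complete if nested sequences $U_n\in\mathcal{U}_n$ have nonempty intersection; tame (w.r.t. $d$) if $\sup\{\operatorname{diam}O:O\in\mathcal{U}_n\}\to0$ and for each $n$ there is $\rho_n>0$ with points in distinct elements of $\mathcal{U}_n$ at distance $\ge\rho_n$. $u_{\mathcal{A}}(x,y)=1/(1+j)$, $j=\inf\{n:\mathcal{U}_n[x]\ne\mathcal{U}_n[y]\}$. *)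

(* Defs.v *)
From Stdlib Require Import Reals Lra Lia Classical ClassicalEpsilon FunctionalExtensionality PropExtensionality.
Open Scope R_scope.

Section Defs.
Variable X : Type.

Definition is_ultrametric (d : X -> X -> R) : Prop :=
  (forall x y, d x y = 0 <-> x = y) /\
  (forall x y, d x y = d y x) /\
  (forall x y z, d x z <= Rmax (d x y) (d y z)).

Definition ball (d : X -> X -> R) (x : X) (r : R) : X -> Prop :=
  fun y => d x y < r.

Definition is_open (d : X -> X -> R) (G : X -> Prop) : Prop :=
  forall x, G x -> exists r, 0 < r /\ forall y, d x y < r -> G y.
Definition is_closed (d : X -> X -> R) (F : X -> Prop) : Prop :=
  is_open d (fun x => ~ F x).
Definition is_clopen (d : X -> X -> R) (O : X -> Prop) : Prop :=
  is_open d O /\ is_closed d O.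

Definition is_partition (d : X -> X -> R) (P : (X -> Prop) -> Prop) : Prop :=
  (forall O, P O -> (exists x, O x) /\ is_clopen d O) /\
  (forall x, exists O, P O /\ O x) /\
  (forall O1 O2, P O1 -> P O2 -> O1 <> O2 -> forall x, ~ (O1 x /\ O2 x)).

Definition is_defining_sequence (d : X -> X -> R)
    (U : nat -> (X -> Prop) -> Prop) : Prop :=
  (forall n, is_partition d (U n)) /\
  (forall n O, U (S n) O -> exists O', U n O' /\ forall x, O x -> O' x) /\
  (forall G, is_open d G -> forall x, G x ->
     exists n O, U n O /\ O x /\ forall y, O y -> G y).

Definition is_complete_defseq (U : nat -> (X -> Prop) -> Prop) : Prop :=
  forall O : nat -> X -> Prop,
    (forall n, U n (O n)) ->
    (forall n x, O (S n) x -> O n x) ->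
    exists x, forall n, O n x.

Definition is_tame (d : X -> X -> R) (U : nat -> (X -> Prop) -> Prop) : Prop :=
  (* sup { diam O : O in U n } -> 0 *)
  (forall eps, 0 < eps -> exists N, forall n, (N <= n)%nat ->
     forall O, U n O -> forall x y, O x -> O y -> d x y <= eps) /\
  (forall n, exists rho, 0 < rho /\
     forall O1 O2, U n O1 -> U n O2 -> O1 <> O2 ->
       forall x y, O1 x -> O2 y -> rho <= d x y).

(* U_n[x] : the element of U n containing x (written as the union of the
   elements containing x, which is that element when U n is a partition) *)
Definition cell (U : nat -> (X -> Prop) -> Prop) (n : nat) (x : X) : X -> Prop :=
  fun z => exists O, U n O /\ O x /\ O z.

Lemma least_exists (P : nat -> Prop) :
  (exists n, P n) -> exists j, P j /\ forall k, (k < j)%nat -> ~ P k.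
Proof.
  intros [n Hn].
  revert Hn. induction n as [n IH] using (well_founded_induction Wf_nat.lt_wf).
  intros Hn.
  destruct (classic (exists k, (k < n)%nat /\ P k)) as [[k [Hk Pk]]|Hno].
  - exact (IH k Hk Pk).
  - exists n; split; [exact Hn|]. intros k Hk Pk. apply Hno; eauto.
Qed.

(* u_A(x,y) = 1/(1+j), j = inf { n : U_n[x] <> U_n[y] }  (and 0 if no such n) *)
Definition uA (U : nat -> (X -> Prop) -> Prop) (x y : X) : R :=
  match excluded_middle_informative (exists n, cell U n x <> cell U n y) with
  | left H =>
      / (1 + INR (proj1_sig (constructive_indefinite_description _
                   (least_exists (fun n => cell U n x <> cell U n y) H))))
  | right _ => 0
  end.

Definition is_complete_metric (m : X -> X -> R) : Prop :=
  forall s : nat -> X,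
    (forall eps, 0 < eps -> exists N, forall p q, (N <= p)%nat -> (N <= q)%nat ->
       m (s p) (s q) < eps) ->
    exists l, forall eps, 0 < eps -> exists N, forall p, (N <= p)%nat -> m (s p) l < eps.

Definition ball_seq (d : X -> X -> R) (n : nat) : (X -> Prop) -> Prop :=
  match n with
  | O => fun O => O = (fun _ => True)
  | S m => fun O => exists x, O = ball d x (/ INR (S m))
  end.

End Defs.
Arguments is_ultrametric {X}. Arguments ball {X}. Arguments is_open {X}. Arguments is_closed {X}. Arguments is_clopen {X}. Arguments is_partition {X}. Arguments is_defining_sequence {X}. Arguments is_complete_defseq {X}. Arguments is_tame {X}. Arguments cell {X}. Arguments uA {X}. Arguments is_complete_metric {X}. Arguments ball_seq {X}.

(* Main.v *)
Require Import Defs.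
From Stdlib Require Import Reals Lra Lia Classical ClassicalEpsilon FunctionalExtensionality PropExtensionality.
Open Scope R_scope.

Definition rr (k : nat) : R := / INR (S k).

Lemma rr_pos k : 0 < rr k.
Proof. unfold rr; apply Rinv_0_lt_compat, lt_0_INR; lia. Qed.

Lemma rr_le k m : (k <= m)%nat -> rr m <= rr k.
Proof.
  intro H; unfold rr; apply Rinv_le_contravar; [apply lt_0_INR; lia| apply le_INR; lia].
Qed.

Lemma rr_lt k : rr (S k) < rr k.
Proof.
  unfold rr; apply Rinv_lt_contravar.
  - apply Rmult_lt_0_compat; apply lt_0_INR; lia.
  - apply lt_INR; lia.
Qed.

Lemma arch1 eps : 0 < eps -> exists m, rr m < eps.
Proof.
  intro He; destruct (archimed_cor1 eps He) as [N [HN HN0]].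
  destruct N as [|m]; [lia|]. exists m; exact HN.
Qed.

Lemma arch2 eps : 0 < eps -> exists m, / (INR m + 2) < eps.
Proof.
  intro He; destruct (arch1 eps He) as [m Hm]. exists m.
  apply Rle_lt_trans with (rr m); auto. unfold rr; rewrite S_INR.
  apply Rinv_le_contravar; [|lra]. pose proof (pos_INR m); lra.
Qed.


Lemma d0 (X : Type) (d : X -> X -> R) (Hd : is_ultrametric d) x : d x x = 0.
Proof. destruct Hd as [H _]; apply H; reflexivity. Qed.

Lemma dsym (X : Type) (d : X -> X -> R) (Hd : is_ultrametric d) x y : d x y = d y x.
Proof. destruct Hd as [_ [H _]]; apply H. Qed.

Lemma dtri (X : Type) (d : X -> X -> R) (Hd : is_ultrametric d) x y z r :
  d x y < r -> d y z < r -> d x z < r.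
Proof.
  destruct Hd as [_ [_ H]]; intros; eapply Rle_lt_trans; [apply (H x y z)|].
  apply Rmax_lub_lt; auto.
Qed.

Lemma ball_eq (X : Type) (d : X -> X -> R) (Hd : is_ultrametric d) a b r :
  d a b < r -> ball d a r = ball d b r.
Proof.
  intro H; apply functional_extensionality; intro w; apply propositional_extensionality.
  unfold ball; split; intro Hw.
  - apply (dtri X d Hd b a w); auto. rewrite (dsym X d Hd); auto.
  - apply (dtri X d Hd a b w); auto.
Qed.

Lemma bsS (X : Type) (d : X -> X -> R) k O :
  ball_seq d (S k) O <-> exists x, O = ball d x (rr k).
Proof. split; intro H; exact H. Qed.

Lemma cell_S (X : Type) (d : X -> X -> R) (Hd : is_ultrametric d) k x :
  cell (ball_seq d) (S k) x = ball d x (rr k).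
Proof.
  apply functional_extensionality; intro z; apply propositional_extensionality.
  split.
  - intros [O [HO [Hx Hz]]]. apply bsS in HO. destruct HO as [c ->].
    unfold ball in *. apply (dtri X d Hd x c z); auto. rewrite (dsym X d Hd); auto.
  - intro Hz. exists (ball d x (rr k)). split; [apply bsS; exists x; reflexivity|].
    split; auto. unfold ball; rewrite (d0 X d Hd); apply rr_pos.
Qed.

Lemma cell_0 (X : Type) (d : X -> X -> R) x :
  cell (ball_seq d) 0 x = fun _ => True.
Proof.
  apply functional_extensionality; intro z; apply propositional_extensionality.
  split; auto. intros _. exists (fun _ => True). simpl; auto.
Qed.

Lemma cell_neq (X : Type) (d : X -> X -> R) (Hd : is_ultrametric d) k x y :
  cell (ball_seq d) (S k) x <> cell (ball_seq d) (S k) y <-> rr k <= d x y.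
Proof.
  rewrite !(cell_S X d Hd). split.
  - intro H. destruct (Rle_or_lt (rr k) (d x y)) as [h|h]; auto.
    exfalso; apply H; apply (ball_eq X d Hd); auto.
  - intros H E. assert (Hy : ball d y (rr k) y).
    { unfold ball; rewrite (d0 X d Hd); apply rr_pos. }
    rewrite <- E in Hy. unfold ball in Hy; lra.
Qed.

Lemma uA_lt (X : Type) (d : X -> X -> R) (Hd : is_ultrametric d) x y m :
  uA (ball_seq d) x y < / (INR m + 2) <-> d x y < rr m.
Proof.
  assert (Hp : 0 < INR m + 2) by (pose proof (pos_INR m); lra).
  unfold uA. destruct (excluded_middle_informative _) as [H|H].
  - destruct (constructive_indefinite_description _ _) as [j [Hj Hmin]].
    cbn [proj1_sig].
    destruct j as [|j'].
    + exfalso; apply Hj; rewrite !cell_0; reflexivity.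
    + apply (cell_neq X d Hd) in Hj.
      destruct (Nat.lt_ge_cases m j') as [Hl|Hl].
      * split; intros _.
        -- assert (Hm := Hmin (S m) ltac:(lia)).
           destruct (Rle_or_lt (rr m) (d x y)) as [h|h]; auto.
           exfalso; apply Hm; apply (cell_neq X d Hd); auto.
        -- apply Rinv_lt_contravar.
           ++ apply Rmult_lt_0_compat; auto. pose proof (pos_INR (S j')); lra.
           ++ rewrite S_INR. apply lt_INR in Hl. lra.
      * split; intro h; exfalso.
        -- assert (/ (INR m + 2) <= / (1 + INR (S j'))); [|lra].
           apply Rinv_le_contravar; [pose proof (pos_INR (S j')); lra|].
           rewrite S_INR. apply le_INR in Hl. lra.
        -- pose proof (rr_le j' m Hl). lra.
  - split; intros _.
    + destruct (Rle_or_lt (rr m) (d x y)) as [h|h]; auto.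
      exfalso; apply H; exists (S m); apply (cell_neq X d Hd); auto.
    + apply Rinv_0_lt_compat; auto.
Qed.

Lemma ball_clopen (X : Type) (d : X -> X -> R) (Hd : is_ultrametric d) c r :
  0 < r -> is_clopen d (ball d c r).
Proof.
  intro Hr. split.
  - intros x Hx. exists r. split; auto.
    intros y Hy. unfold ball in *. apply (dtri X d Hd c x y); auto.
  - intros x Hx. unfold ball in Hx.
    exists r. split; auto.
    intros y Hy Hcy. apply Hx. unfold ball in *.
    apply (dtri X d Hd c y x); auto. rewrite (dsym X d Hd); auto.
Qed.

Lemma ctr (X : Type) (d : X -> X -> R) (Hd : is_ultrametric d) c k :
  ball d c (rr k) c.
Proof. unfold ball; rewrite (d0 X d Hd); apply rr_pos. Qed.

Lemma defseq (X : Type) (d : X -> X -> R) (x0 : X) (Hd : is_ultrametric d) :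
  is_defining_sequence d (ball_seq d).
Proof.
  split; [|split].
  - intros [|k]; (split; [|split]).
    + intros O HO; simpl in HO; subst O. split; [exists x0; auto|].
      split.
      * intros x _; exists 1; split; [lra|auto].
      * intros x Hx; exfalso; apply Hx; auto.
    + intros x; exists (fun _ => True); simpl; auto.
    + intros O1 O2 H1 H2 Hn; simpl in *; subst; congruence.
    + intros O HO; apply bsS in HO; destruct HO as [c ->].
      split; [exists c; apply (ctr X d Hd)| apply (ball_clopen X d Hd); apply rr_pos].
    + intros x; exists (ball d x (rr k)); split; [apply bsS; eauto| apply (ctr X d Hd)].
    + intros O1 O2 H1 H2 Hn x [Hx1 Hx2].
      apply bsS in H1; apply bsS in H2. destruct H1 as [a ->]; destruct H2 as [b ->].
      apply Hn. apply (ball_eq X d Hd). unfold ball in *.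
      apply (dtri X d Hd a x b); auto. rewrite (dsym X d Hd); auto.
  - intros [|k] O HO; apply bsS in HO; destruct HO as [c ->].
    + exists (fun _ => True); simpl; auto.
    + exists (ball d c (rr k)); split; [apply bsS; exists c; reflexivity|].
      intros x Hx; unfold ball in *. pose proof (rr_lt k); unfold rr in *; lra.
  - intros G HG x Gx. destruct (HG x Gx) as [r [Hr HG']].
    destruct (arch1 r Hr) as [k Hk]. exists (S k), (ball d x (rr k)).
    split; [apply bsS; eauto|]. split; [apply (ctr X d Hd)|].
    intros y Hy; apply HG'; unfold ball in Hy; lra.
Qed.

Lemma tame (X : Type) (d : X -> X -> R) (Hd : is_ultrametric d) :
  is_tame d (ball_seq d).
Proof.
  split.
  - intros eps He. destruct (arch1 eps He) as [m Hm]. exists (S m).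
    intros [|n] Hn O HO x y Hx Hy; [lia|]. apply bsS in HO; destruct HO as [c ->].
    unfold ball in *. pose proof (rr_le m n ltac:(lia)).
    assert (d x y < rr n); [|lra].
    apply (dtri X d Hd x c y); auto. rewrite (dsym X d Hd); auto.
  - intros [|k].
    + exists 1; split; [lra|]. intros O1 O2 H1 H2 Hn; simpl in *; subst; congruence.
    + exists (rr k); split; [apply rr_pos|].
      intros O1 O2 H1 H2 Hn x y Hx Hy.
      apply bsS in H1; apply bsS in H2. destruct H1 as [a ->]; destruct H2 as [b ->].
      destruct (Rle_or_lt (rr k) (d x y)) as [h|h]; auto. exfalso; apply Hn.
      unfold ball in *.
      apply (ball_eq X d Hd). apply (dtri X d Hd a x b); auto.
      apply (dtri X d Hd x y b); auto. rewrite (dsym X d Hd); auto.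
Qed.

Fixpoint Mseq (Nf : nat -> nat) (m : nat) : nat :=
  match m with O => Nf O | S m' => Nat.max (Mseq Nf m') (Nf (S m')) end.

Lemma Mseq_ge Nf m : (Nf m <= Mseq Nf m)%nat.
Proof. destruct m; simpl; lia. Qed.

Lemma Mseq_mono Nf m p : (m <= p)%nat -> (Mseq Nf m <= Mseq Nf p)%nat.
Proof. induction 1; simpl; lia. Qed.

Lemma compl_dir1 (X : Type) (d : X -> X -> R) (Hd : is_ultrametric d) :
  is_complete_defseq (ball_seq d) -> is_complete_metric (uA (ball_seq d)).
Proof.
  intros HC s Hs.
  assert (HN : forall m, exists N, forall p q, (N <= p)%nat -> (N <= q)%nat ->
     d (s p) (s q) < rr m).
  { intro m. assert (Hp : 0 < / (INR m + 2)).
    { apply Rinv_0_lt_compat. pose proof (pos_INR m); lra. }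
    destruct (Hs _ Hp) as [N HN]. exists N. intros p q Hp' Hq'.
    apply (uA_lt X d Hd). auto. }
  set (Nf := fun m => proj1_sig (constructive_indefinite_description _ (HN m))).
  assert (HNf : forall m p q, (Nf m <= p)%nat -> (Nf m <= q)%nat -> d (s p) (s q) < rr m).
  { intro m. unfold Nf. destruct (constructive_indefinite_description _ _) as [N HN']. exact HN'. }
  set (M := Mseq Nf).
  assert (HM : forall m p q, (M m <= p)%nat -> (M m <= q)%nat -> d (s p) (s q) < rr m).
  { intros m p q h1 h2. pose proof (Mseq_ge Nf m). apply HNf; unfold M in *; lia. }
  set (O := fun n => match n with 0%nat => (fun _ : X => True) | S m => ball d (s (M m)) (rr m) end).
  destruct (HC O) as [l Hl].
  - intros [|m]; [reflexivity|]. apply bsS. exists (s (M m)); reflexivity.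
  - intros [|m] x Hx; [exact I|]. simpl in *. unfold ball in *.
    apply (dtri X d Hd _ (s (M (S m))) _).
    + apply HM; [lia|]. unfold M; apply Mseq_mono; lia.
    + pose proof (rr_lt m). lra.
  - exists l. intros eps He. destruct (arch2 eps He) as [m Hm].
    exists (M m). intros p Hp. eapply Rlt_trans; [|exact Hm].
    apply (uA_lt X d Hd). apply (dtri X d Hd _ (s (M m)) _).
    + apply HM; lia.
    + exact (Hl (S m)).
Qed.

Lemma compl_dir2 (X : Type) (d : X -> X -> R) (Hd : is_ultrametric d) :
  is_complete_metric (uA (ball_seq d)) -> is_complete_defseq (ball_seq d).
Proof.
  intros HC O HU Hnest.
  assert (Hn : forall m p, (m <= p)%nat -> forall x, O p x -> O m x).
  { intros m p h; induction h; auto. }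
  set (c := fun m => proj1_sig (constructive_indefinite_description _ (HU (S m)))).
  assert (Hc : forall m, O (S m) = ball d (c m) (rr m)).
  { intro m. unfold c. destruct (constructive_indefinite_description _ _) as [y Hy]. exact Hy. }
  assert (Hin : forall m p, (m <= p)%nat -> d (c m) (c p) < rr m).
  { intros m p h. assert (O (S m) (c p)).
    { apply (Hn (S m) (S p)); [lia|]. rewrite Hc. apply (ctr X d Hd). }
    rewrite Hc in H. exact H. }
  destruct (HC c) as [l Hl].
  - intros eps He. destruct (arch2 eps He) as [m Hm]. exists m.
    intros p q hp hq. eapply Rlt_trans; [|exact Hm].
    apply (uA_lt X d Hd). apply (dtri X d Hd _ (c m) _).
    + rewrite (dsym X d Hd). auto.
    + auto.
  - exists l. intros [|m].
    + pose proof (HU 0%nat) as H0. simpl in H0. rewrite H0. exact I.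
    + assert (Hp : 0 < / (INR m + 2)).
      { apply Rinv_0_lt_compat. pose proof (pos_INR m); lra. }
      destruct (Hl _ Hp) as [N HN].
      assert (h := HN (Nat.max N m) ltac:(lia)).
      apply (uA_lt X d Hd) in h.
      rewrite Hc. unfold ball. apply (dtri X d Hd _ (c (Nat.max N m)) _); auto.
      apply Hin; lia.
Qed.

Theorem proposition3p11 (X : Type) (d : X -> X -> R) (x0 : X)
  (Hd : is_ultrametric d) :
  is_defining_sequence d (ball_seq d) /\
  is_tame d (ball_seq d) /\
  (is_complete_defseq (ball_seq d) <-> is_complete_metric (uA (ball_seq d))).
Proof.
  split; [exact (defseq X d x0 Hd)|]. split; [exact (tame X d Hd)|].
  split; [apply compl_dir1 | apply compl_dir2]; auto.
Qed.
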